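(* Assume $d_0\delta>2$ and let $\varepsilon_0=\frac{d_0}{2}-\frac1\delta>0$ and $t=\frac{d_0}{2}$. Let $G=(L\cup R,E)$ be a $(c,d,\alpha,\delta)$-bipartite expander with $L=[n]$, $C_0\subseteq\mathbb{F}_2^d$ a linear code of minimum distance $d_0$, $x\in\mathbb{F}_2^n$ and $y\in T(G,C_0)$ with $d_H(x,y)\le\alpha n$. Let $x'=\mathsf{RandFlip}(x)$. Then $\mathbb{E}[d_H(x',y)]\le\left(1-\frac{\varepsilon_0\delta}{t}\right)d_H(x,y)$.
   Context: Binary linear codes, Hamming distance $d_H$. A bipartite graph $G=(L\cup R,E)$ is $(c,d)$-regular if left degrees are $c$ and right degrees $d$; $N(S)$ is the neighborhood of $S$. A $(c,d,\alpha,\delta)$-bipartite expander ($c,d$ positive integers, $\alpha,\delta\in(0,1]$) is a $(c,d)$-regular bipartite graph with $|N(S)|\ge\delta c|S|$ for every $S\subseteq L$, $|S|\le\alpha|L|$. Tanner code: $L=[n]$, for each $v\in R$ a fixed ordering of $N(v)$ defines $x_{N(v)}\in\mathbb{F}_2^d$, and $T(G,C_0)=\{x: x_{N(v)}\in C_0\ \forall v\in R\}$. For $z\in\mathbb{F}_2^d$, $\mathsf{Decode}(z)$ is the codeword of $C_0$ closest to $z$, ties broken lexicographically. $\mathsf{RandFlip}(x)$: set $t=d_0/2$ and $p_1=\dots=p_n=0$; for each $v\in R$, let $w_v=\mathsf{Decode}(x_{N(v)})$; if $1\le d_H(w_v,x_{N(v)})<t$, let $i$ be the smallest element of $N(v)$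 at which $w_v$ and $x_{N(v)}$ differ and increase $p_i$ by $\frac{t-d_H(w_v,x_{N(v)})}{ct}$. Then flip each $x_i$ independently with probability $p_i$ and return the resulting word. *)

(* Defs.v *)
From HB Require Import structures.
From mathcomp Require Import all_boot all_order all_algebra.
From mathcomp Require Import reals.
Set Implicit Arguments. Unset Strict Implicit. Unset Printing Implicit Defensive.
Import Order.TTheory GRing.Theory Num.Theory.
Local Open Scope ring_scope.

(* Left vertices L = 'I_n, right vertices R = 'I_m.
   The bipartite graph together with the fixed ordering of each N(v)
   is given by  nbr : 'I_m -> 'I_d -> 'I_n,  nbr v j = j-th neighbour of v. *)

Definition dH (k : nat) (u v : 'rV['F_2]_k) : nat :=
  #|[set j : 'I_k | u 0 j != v 0 j]|.

(* (c,d)-regular simple bipartite graph: nbr v is injective (so right degree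
   is d) and every left vertex has exactly c neighbours. *)
Definition biregular (n m d : nat) (nbr : 'I_m -> 'I_d -> 'I_n) (c : nat) : Prop :=
  (forall v, injective (nbr v)) /\
  (forall i : 'I_n, #|[set v : 'I_m | i \in codom (nbr v)]| = c).

Definition nbhd (n m d : nat) (nbr : 'I_m -> 'I_d -> 'I_n) (S : {set 'I_n})
  : {set 'I_m} := [set v | [exists j, nbr v j \in S]].

Definition expander (R : realType) (n m d : nat) (nbr : 'I_m -> 'I_d -> 'I_n)
  (c : nat) (alpha delta : R) : Prop :=
  [/\ (0 < c)%N /\ (0 < d)%N, 0 < alpha <= 1, 0 < delta <= 1,
      biregular nbr c &
      forall S : {set 'I_n}, #|S|%:R <= alpha * n%:R ->
        delta * c%:R * #|S|%:R <= #|nbhd nbr S|%:R].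

Definition linear_code (k : nat) (C : {set 'rV['F_2]_k}) : Prop :=
  [/\ 0 \in C,
      forall u v, u \in C -> v \in C -> u + v \in C &
      forall (a : 'F_2) u, u \in C -> a *: u \in C].

Definition min_dist (k : nat) (C : {set 'rV['F_2]_k}) (d0 : nat) : Prop :=
  (exists u v, [/\ u \in C, v \in C, u != v & dH u v = d0]) /\
  (forall u v, u \in C -> v \in C -> u != v -> (d0 <= dH u v)%N).

Definition restr (n m d : nat) (nbr : 'I_m -> 'I_d -> 'I_n) (x : 'rV['F_2]_n)
  (v : 'I_m) : 'rV['F_2]_d := \row_j x 0 (nbr v j).

Definition tanner (n m d : nat) (nbr : 'I_m -> 'I_d -> 'I_n)
  (C0 : {set 'rV['F_2]_d}) : {set 'rV['F_2]_n} :=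
  [set x | [forall v, restr nbr x v \in C0]].

Definition lex_lt (k : nat) (u w : 'rV['F_2]_k) : bool :=
  [exists j : 'I_k, [forall j' : 'I_k, (j' < j)%N ==> (u 0 j' == w 0 j')]
                    && (u 0 j == 0) && (w 0 j == 1)].

(* Decode z : the codeword of C0 closest to z, ties broken lexicographically
   (0 if C0 is empty, which does not happen for linear codes) *)
Definition closest (k : nat) (C0 : {set 'rV['F_2]_k}) (z w : 'rV['F_2]_k) : bool :=
  (w \in C0) && [forall w' in C0, (dH w z <= dH w' z)%N].

Definition Decode (k : nat) (C0 : {set 'rV['F_2]_k}) (z : 'rV['F_2]_k)
  : 'rV['F_2]_k :=
  odflt 0 [pick w | closest C0 z w &&
                    [forall w', closest C0 z w' ==> (w' == w) || lex_lt w w']].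

Definition diffset (n m d : nat) (nbr : 'I_m -> 'I_d -> 'I_n)
  (C0 : {set 'rV['F_2]_d}) (x : 'rV['F_2]_n) (v : 'I_m) : {set 'I_n} :=
  [set i | [exists j, (nbr v j == i) &&
             (Decode C0 (restr nbr x v) 0 j != restr nbr x v 0 j)]].

Definition flip_prob (R : realType) (n m d : nat) (nbr : 'I_m -> 'I_d -> 'I_n)
  (C0 : {set 'rV['F_2]_d}) (d0 c : nat) (x : 'rV['F_2]_n) (i : 'I_n) : R :=
  let t : R := d0%:R / 2 in
  \sum_(v : 'I_m |
          let dv := dH (Decode C0 (restr nbr x v)) (restr nbr x v) in
          [&& (1 <= dv)%N, (dv%:R < t),
              i \in diffset nbr C0 x v &
              [forall i' in diffset nbr C0 x v, (i <= i')%N]])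
     (t - (dH (Decode C0 (restr nbr x v)) (restr nbr x v))%:R) / (c%:R * t).

(* x' = RandFlip(x) = x + f where the flip pattern f has independent
   coordinates, f_i = 1 with probability p_i.  Probability of pattern f: *)
Definition flip_pattern_prob (R : realType) (n : nat) (p : 'I_n -> R)
  (f : 'rV['F_2]_n) : R :=
  \prod_(i < n) (if f 0 i == 1 then p i else 1 - p i).

Definition expected_dist_randflip (R : realType) (n m d : nat)
  (nbr : 'I_m -> 'I_d -> 'I_n) (C0 : {set 'rV['F_2]_d}) (d0 c : nat)
  (x y : 'rV['F_2]_n) : R :=
  \sum_(f : 'rV['F_2]_n)
     flip_pattern_prob (flip_prob R nbr C0 d0 c x) f * (dH (x + f) y)%:R.

(* Main.v *)
Require Import Defs.
From HB Require Import structures.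
From mathcomp Require Import all_boot all_order all_algebra.
From mathcomp Require Import reals.
From mathcomp Require Import ring lra zify.
Import Order.TTheory GRing.Theory Num.Theory.
Local Open Scope ring_scope.

Set Implicit Arguments. Unset Strict Implicit.


Lemma F2_cases (b : 'F_2) : b = 0 \/ b = 1.
Proof. case: b => [[|[|k]] //= Hk]; [left|right]; exact: val_inj. Qed.

Lemma sumF2 (R : realType) (F : 'F_2 -> R) : \sum_(b : 'F_2) F b = F 0 + F 1.
Proof.
rewrite (bigD1 0) //= (bigD1 1) //= big1 ?addr0 // => b /andP[b1 b0].
by case: (F2_cases b) b0 b1 => ->.
Qed.

Lemma sum_prod_rV (R : realType) (n : nat) (F : 'I_n -> 'F_2 -> R) :
  \sum_(f : 'rV['F_2]_n) \prod_(k < n) F k (f 0 k) = \prod_(k < n) (F k 0 + F k 1).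
Proof.
rewrite -(eq_bigr _ (fun k _ => sumF2 (F k))) bigA_distr_bigA /=.
rewrite (reindex (fun f : 'rV['F_2]_n => [ffun k => f 0 k])) /=.
  by apply: eq_bigr => f _; apply: eq_bigr => k _; rewrite ffunE.
apply: onW_bij; exists (fun g : {ffun 'I_n -> 'F_2} => \row_k g k).
  by move=> f; apply/rowP => k; rewrite mxE ffunE.
by move=> g; apply/ffunP => k; rewrite ffunE mxE.
Qed.

Lemma dHC k (u v : 'rV['F_2]_k) : dH u v = dH v u.
Proof. by rewrite /dH; apply: eq_card => j; rewrite !inE eq_sym. Qed.

Lemma dH_tri k (u v w : 'rV['F_2]_k) : (dH u w <= dH u v + dH v w)%N.
Proof.
rewrite /dH; apply: leq_trans (leq_card_setU _ _); apply: subset_leq_card.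
apply/subsetP => j; rewrite !inE; by case: (u 0 j =P v 0 j) => // ->.
Qed.



Lemma dHuu k (u : 'rV['F_2]_k) : dH u u = 0%N.
Proof. by apply/eqP; rewrite /dH cards_eq0; apply/eqP/setP => j; rewrite !inE eqxx. Qed.

Lemma Decode_unique k (C0 : {set 'rV['F_2]_k}) d0 (z u : 'rV['F_2]_k) :
  min_dist C0 d0 -> u \in C0 -> (2 * dH u z < d0)%N -> Decode C0 z = u.
Proof.
move=> [_ md] uC h.
have far w : w \in C0 -> w != u -> (dH u z < dH w z)%N.
  move=> wC wu; have := md w u wC uC wu; have := dH_tri w z u.
  rewrite (dHC z u); lia.
have cu : closest C0 z u.
  rewrite /closest uC /=; apply/forall_inP => w wC.
  by case: (eqVneq w u) => [->|wu] //; exact: ltnW (far w wC wu).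
have cw w : closest C0 z w -> w = u.
  move=> /andP[wC /forall_inP H]; apply/eqP; apply: contraT => wu.
  have := H u uC; have := far w wC wu; lia.
rewrite /Decode; case: pickP => [w /andP[/cw -> _] //| /(_ u)].
rewrite cu /= => /negbT/negP[]; apply/forallP => w'; apply/implyP => /cw ->.
by rewrite eqxx.
Qed.

Lemma Decode_in k (C0 : {set 'rV['F_2]_k}) z :
  linear_code C0 -> Decode C0 z \in C0.
Proof.
move=> [C00 _ _]; rewrite /Decode; by case: pickP => [w /andP[/andP[wC _] _] //|_].
Qed.


Lemma dH_sum (R : realType) k (u v : 'rV['F_2]_k) :
  (dH u v)%:R = \sum_i ((u 0 i != v 0 i)%:R : R).
Proof.
rewrite /dH -sumr_const big_mkcond /=; apply: eq_bigr => i _.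
by rewrite inE; case: (_ != _).
Qed.

Lemma expect_eq (R : realType) n (p : 'I_n -> R) (x y : 'rV['F_2]_n) :
  \sum_f flip_pattern_prob p f * (dH (x + f) y)%:R =
  \sum_i ((x 0 i != y 0 i)%:R - (if x 0 i != y 0 i then p i else - p i)).
Proof.
under eq_bigr => f _ do rewrite dH_sum mulr_sumr.
rewrite exchange_big /=; apply: eq_bigr => i _.
pose g (b : 'F_2) : R := ((x 0 i + b) != y 0 i)%:R.
pose q k (b : 'F_2) : R := if b == 1 then p k else 1 - p k.
pose Q k b := q k b * (if k == i then g b else 1).
transitivity (\sum_(f : 'rV['F_2]_n) \prod_(k < n) Q k (f 0 k)).
  apply: eq_bigr => f _; rewrite /Q big_split /= -big_mkcond big_pred1_eq /g mxE.
  by [].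
rewrite sum_prod_rV (bigD1 i) //= big1 ?mulr1.
  rewrite /Q /q /g eqxx /= addr0.
  by case: (F2_cases (x 0 i)) => ->; case: (F2_cases (y 0 i)) => -> /=; lra.
move=> k ki; rewrite /Q /q (negbTE ki) /= !mulr1; lra.
Qed.


Lemma ev_card n m d (nbr : 'I_m -> 'I_d -> 'I_n) (x y : 'rV['F_2]_n) v :
  dH (restr nbr x v) (restr nbr y v) =
  #|[set j | nbr v j \in [set i | x 0 i != y 0 i]]|.
Proof. by apply: eq_card => j; rewrite !inE !mxE. Qed.

Lemma ev_nbhd n m d (nbr : 'I_m -> 'I_d -> 'I_n) (x y : 'rV['F_2]_n) v :
  (dH (restr nbr x v) (restr nbr y v) != 0%N) =
  (v \in nbhd nbr [set i | x 0 i != y 0 i]).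
Proof.
rewrite ev_card inE -lt0n card_gt0; apply/set0Pn/existsP => [[j]|[j]];
by rewrite ?inE => H; exists j; rewrite ?inE.
Qed.

Lemma sum_ev n m d (nbr : 'I_m -> 'I_d -> 'I_n) c (x y : 'rV['F_2]_n) :
  biregular nbr c ->
  leq (\sum_v dH (restr nbr x v) (restr nbr y v)) (muln c #|[set i | x 0 i != y 0 i]|).
Proof.
move=> [inj deg]; set S := [set i | x 0 i != y 0 i].
apply: (@leq_trans (\sum_v \sum_(i in S) (i \in codom (nbr v) : nat))).
  apply: leq_sum => v _; rewrite ev_card -(card_imset _ (inj v)).
  apply: (@leq_trans #|[set i in S | i \in codom (nbr v)]|).
    apply: subset_leq_card; apply/subsetP => i /imsetP[j]; rewrite !inE => jS ->.
    by rewrite jS codom_f.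
  rewrite -sum1_card big_mkcond /= [X in (_ <= X)%N]big_mkcond /=.
  by apply: leq_sum => i _; rewrite [in X in (X <= _)%N]inE; case: (i \in S); case: (_ \in codom _).
rewrite exchange_big /= mulnC -sum_nat_const leq_eqVlt; apply/orP; left; apply/eqP.
apply: eq_bigr => i _; rewrite -(deg i) -sum1_card big_mkcond /=.
rewrite [RHS]big_mkcond /=; by apply: eq_bigr => v _; rewrite inE; case: (_ \in _).
Qed.

Unset Implicit Arguments. Set Strict Implicit.

Theorem theorem3p2 (R : realType) (n m c d d0 : nat) (alpha delta : R)
  (nbr : 'I_m -> 'I_d -> 'I_n) (C0 : {set 'rV['F_2]_d}) (x y : 'rV['F_2]_n) :
  expander nbr c alpha delta ->
  linear_code C0 ->
  min_dist C0 d0 ->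
  2 < d0%:R * delta ->
  y \in tanner nbr C0 ->
  (dH x y)%:R <= alpha * n%:R ->
  let eps0 : R := d0%:R / 2 - 1 / delta in
  let t : R := d0%:R / 2 in
  expected_dist_randflip R nbr C0 d0 c x y
    <= (1 - eps0 * delta / t) * (dH x y)%:R.
Proof.
move=> [[c0 dpos] aa dd breg expd] lin md hd0 yT hS.
rewrite /=; set t := (d0%:R / 2 : R).
case/andP: aa => a0 a1; case/andP: dd => dl0 dl1.
have d0pos : (0 < d0)%N.
  rewrite lt0n; apply/negP => /eqP d00; move: hd0; rewrite d00 mul0r; lra.
have d0R : 0 < (d0%:R : R) by rewrite ltr0n.
have t2 : 2 * t = d0%:R by rewrite /t; field.
have tpos : 0 < t by lra.
have cR : 0 < (c%:R : R) by rewrite ltr0n.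
have ctpos : 0 < c%:R * t by apply: mulr_gt0.
set S := [set i | x 0 i != y 0 i].
set p := flip_prob R nbr C0 d0 c x.
rewrite /expected_dist_randflip expect_eq sumrB -dH_sum.
set X := \sum_i (if x 0 i != y 0 i then p i else - p i).
pose zv v := restr nbr x v.
pose w v := Decode C0 (zv v).
pose dv v := dH (w v) (zv v).
pose ev v := dH (zv v) (restr nbr y v).
pose a v := (t - (dv v)%:R) / (c%:R * t).
pose cond v (i : 'I_n) := [&& (1 <= dv v)%N, (dv v)%:R < t, i \in diffset nbr C0 x v &
   [forall i' in diffset nbr C0 x v, (i <= i')%N]].
pose s i : R := if x 0 i != y 0 i then 1 else -1.
have pE i : p i = \sum_(v | cond v i) a v by [].
have XE : X = \sum_v \sum_(i | cond v i) s i * a v.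
  rewrite /X; transitivity (\sum_i \sum_(v | cond v i) s i * a v).
    apply: eq_bigr => i _; rewrite pE /s; case: ifP => _.
      by apply: eq_bigr => v _; rewrite mul1r.
    by rewrite -sumrN; apply: eq_bigr => v _; rewrite mulN1r.
  rewrite (exchange_big_dep xpredT) //=.
have yvC v : restr nbr y v \in C0 by move: yT; rewrite inE => /forallP.
have dset_sub v (Dy : Decode C0 (restr nbr x v) = restr nbr y v) i :
    i \in diffset nbr C0 x v -> x 0 i != y 0 i.
  rewrite inE => /existsP[j /andP[/eqP <-]]; rewrite Dy !mxE eq_sym; done.
have Yv v : (if ev v == 0%N then 0 else (t - (ev v)%:R) / (c%:R * t))
              <= \sum_(i | cond v i) s i * a v.
  case: (ltnP (2 * ev v) d0) => hev.
  - have Dy : Decode C0 (restr nbr x v) = restr nbr y v.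
      by apply: Decode_unique md (yvC v) _; rewrite dHC.
    have dvE : dv v = ev v by rewrite /dv /w /ev Dy dHC.
    case: eqP => [e0 | /eqP en0].
      by rewrite big_pred0 // => i; rewrite /cond dvE e0.
    have [j hj] : exists j, x 0 (nbr v j) != y 0 (nbr v j).
      move: en0; rewrite /ev /zv ev_card -lt0n card_gt0 => /set0Pn[j].
      by rewrite !inE => hj; exists j.
    have i0D : nbr v j \in diffset nbr C0 x v.
      by rewrite inE; apply/existsP; exists j; rewrite eqxx Dy !mxE eq_sym.
    case: (arg_minnP (fun i : 'I_n => nat_of_ord i) i0D) => i1 i1D i1min.
    have evt : (ev v)%:R < t.
      have : ((2 * ev v)%:R : R) < d0%:R by rewrite ltr_nat.
      rewrite natrM; lra.
    have ci1 : cond v i1.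
      rewrite /cond dvE lt0n en0 evt /=; apply/andP; split; [exact: i1D | exact/forall_inP].
    rewrite (bigD1 i1) //= {1}/s (dset_sub v Dy i1 i1D) mul1r.
    have -> : a v = (t - (ev v)%:R) / (c%:R * t) by rewrite /a dvE.
    rewrite lerDl; apply: sumr_ge0 => i /andP[ci _].
    move: ci => /and4P[_ _ iD _]; rewrite /s (dset_sub v Dy i iD) mul1r.
    apply: divr_ge0; [lra | exact: ltW].
  - have en0 : ev v != 0%N by apply/eqP => e0; move: hev; rewrite e0; lia.
    rewrite (negbTE en0).
    have tev : t <= (ev v)%:R.
      have : (d0%:R : R) <= (2 * ev v)%:R by rewrite ler_nat.
      rewrite natrM; lra.
    case: (pickP (cond v)) => [i0 ci0 | none]; last first.
      rewrite big_pred0 // ler_pdivrMr // mul0r; lra.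
    rewrite (bigD1 i0) //= big_pred0 ?addr0; last first.
      move=> i; apply/negP => /andP[ci ii0].
      move: ci ci0 => /and4P[_ _ iD /forall_inP hi] /and4P[_ _ i0D /forall_inP hi0].
      have := hi _ i0D; have := hi0 _ iD => h1 h2.
      by move: ii0; rewrite -val_eqE /=; apply/negP; rewrite negbK eqn_leq h1 h2.
    move: ci0 => /and4P[dv1 dvt _ _].
    have wy : w v != restr nbr y v.
      apply/eqP => wyE; move: dvt; rewrite /dv wyE dHC -/(ev v); lra.
    have hd : (d0 <= dv v + ev v)%N.
      apply: leq_trans (md.2 _ _ (Decode_in _ lin) (yvC v) wy) _.
      exact: dH_tri.
    have hdR : (d0%:R : R) <= (dv v)%:R + (ev v)%:R by rewrite -natrD ler_nat.
    rewrite /a mulrA; apply: ler_wpM2r; first by rewrite invr_ge0 ltW.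
    rewrite /s; case: ifP => _; lra.
have eN v : (ev v != 0%N) = (v \in nbhd nbr S) := ev_nbhd nbr x y v.
have sumY : \sum_v (if ev v == 0%N then 0 else (t - (ev v)%:R) / (c%:R * t))
    = (t * #|nbhd nbr S|%:R - (\sum_v ev v)%:R) / (c%:R * t).
  transitivity (\sum_(v in nbhd nbr S) (t - (ev v)%:R) / (c%:R * t)).
    by rewrite [RHS]big_mkcond; apply: eq_bigr => v _; rewrite -eN; case: eqP.
  rewrite -mulr_suml sumrB sumr_const mulr_natr; congr ((_ - _) / _).
  rewrite natr_sum [LHS]big_mkcond; apply: eq_bigr => v _; rewrite -eN.
  by case: eqP => // ->.
have dS : dH x y = #|S| by [].
rewrite dS in hS *.
have hN : delta * c%:R * #|S|%:R <= #|nbhd nbr S|%:R := expd S hS.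
have hE : ((\sum_v ev v)%:R : R) <= c%:R * #|S|%:R.
  by rewrite -natrM ler_nat; exact: sum_ev.
have Xge : delta * #|S|%:R - #|S|%:R / t <= X.
  rewrite XE; apply: le_trans (ler_sum _ (fun v _ => Yv v)); rewrite sumY.
  have -> : delta * #|S|%:R - #|S|%:R / t =
      (t * (delta * c%:R * #|S|%:R) - c%:R * #|S|%:R) / (c%:R * t).
    by field; apply/andP; split; apply: lt0r_neq0.
  apply: ler_wpM2r; first by rewrite invr_ge0 ltW.
  nra.
have -> : (t - 1 / delta) * delta / t = delta - 1 / t.
  by field; apply/andP; split; apply: lt0r_neq0.
have -> : (1 - (delta - 1 / t)) * #|S|%:R = #|S|%:R - delta * #|S|%:R + #|S|%:R / t.
  by field; apply: lt0r_neq0.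
lra.
Qed.
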